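(* Let $W$ be a real $N\times N$ matrix with singular value decomposition $W=U\Sigma V^\top$ and rank $n$, where $1\le n<N$, and let $V_n$ be the $N\times n$ matrix of the first $n$ right singular vectors of $W$. Let $g:\mathbb{R}^N\times\mathbb{R}^N\to\mathbb{R}^N$ be continuously differentiable and suppose that its Jacobian with respect to the first argument satisfies $J_x(x,y)=\big(\partial g_i/\partial x_j\big)_{i,j}=aI$ for all $(x,y)$, for some real constant $a$. Let $M=V_n^\top$ and consider the complete dynamics $\dot x=g(x,Wx)$ and reduced dynamics $\dot X=Mg(M^+X,WM^+X)$. Then the alignment error \[\mathcal{E}(x)=\frac{1}{\sqrt n}\big\|Mg(x,Wx)-Mg(M^+Mx,WM^+Mx)\big\|\] vanishes for all $x\in\mathbb{R}^N$.
   Context: $\|\cdot\|$ is the Euclidean norm and $M^+$ the Moore–Penrose pseudoinverse of $M$. *)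

(* Defs.v *)
From HB Require Import structures.
From mathcomp Require Import all_boot all_order all_algebra.
From mathcomp Require Import all_classical all_reals all_analysis.
Set Implicit Arguments. Unset Strict Implicit. Unset Printing Implicit Defensive.
Import Order.TTheory GRing.Theory Num.Theory.
Import numFieldNormedType.Exports.
Local Open Scope ring_scope.

Definition enorm (R : realType) (m : nat) (v : 'cV[R]_m) : R :=
  Num.sqrt (\sum_(i < m) v i 0 ^+ 2).

Definition is_MP_pinv (R : realType) (m k : nat) (A : 'M[R]_(m, k)) (B : 'M[R]_(k, m)) : Prop :=
  [/\ A *m B *m A = A, B *m A *m B = B, (A *m B)^T = A *m B & (B *m A)^T = B *m A].

Definition is_SVD (R : realType) (N : nat) (W U V : 'M[R]_N) (s : 'rV[R]_N) : Prop :=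
  [/\ U^T *m U = 1%:M, V^T *m V = 1%:M,
      (forall i, 0 <= s 0 i),
      (forall i j : 'I_N, (i <= j)%N -> s 0 j <= s 0 i)
    & W = U *m diag_mx s *m V^T].

Definition jacobian_col (R : realType) (N : nat) (f : 'cV[R]_N -> 'cV[R]_N) (x : 'cV[R]_N) : 'M[R]_N :=
  \matrix_(i < N, j < N) ('D_(delta_mx j 0) f x) i 0.

(* Continuously differentiable map R^N x R^N -> R^N: differentiable everywhere
   with continuous derivative (continuity of every directional derivative,
   equivalent to continuity of the differential in finite dimension). *)
Definition C1 (R : realType) (N : nat) (G : 'cV[R]_N * 'cV[R]_N -> 'cV[R]_N) : Prop :=
  (forall p, differentiable G p) /\ (forall v, continuous (fun p => 'D_v G p)).

(* Main.v *)
Require Import Defs.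
From HB Require Import structures.
From mathcomp Require Import all_boot all_order all_algebra.
From mathcomp Require Import all_classical all_reals all_analysis.
Import Order.TTheory GRing.Theory Num.Theory.
Import numFieldNormedType.Exports.
Local Open Scope ring_scope.

Lemma dir_der (R : realType) (N : nat) (f : 'cV[R]_N -> 'cV[R]_N) (a : R)
  (df : forall p, differentiable f p)
  (hJ : forall p, jacobian_col f p = a%:M) p d : 'D_d f p = a *: d.
Proof.
rewrite deriveE //.
rewrite [in LHS](matrix_sum_delta d) linear_sum.
rewrite [in RHS](matrix_sum_delta d) scaler_sumr.
apply: eq_bigr => i _; rewrite !big_ord1 linearZ /= -deriveE //.
rewrite scalerA mulrC -scalerA.
congr (_ *: _); apply/matrixP => k l; rewrite ord1.
have := congr1 (fun A : 'M[R]_N => A k i) (hJ p); rewrite !mxE ord1 => ->.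
by rewrite eqxx andbT mulr_natr.
Qed.

Lemma line_der (R : realType) (N : nat) (F : 'cV[R]_N -> 'cV[R]_N) (d x' : 'cV[R]_N) t :
  let gl := fun s : R => F (s *: d + x') in
  (fun h : R => h^-1 *: ((gl \o shift t) (h *: 1) - gl t)) =
  (fun h : R => h^-1 *: ((F \o shift (t *: d + x')) (h *: d) - F (t *: d + x'))).
Proof.
move=> gl; apply: funext => h /=; rewrite /gl /shift /=.
rewrite [h *: 1]mulr1. by rewrite scalerDl addrA.
Qed.

Lemma affine_of_jac (R : realType) (N : nat) (f : 'cV[R]_N -> 'cV[R]_N) (a : R)
  (df : forall p, differentiable f p)
  (hJ : forall p, jacobian_col f p = a%:M) x x' : f x - f x' = a *: (x - x').
Proof.
pose F z := f z - a *: z.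
have dF : forall p v, is_derive p v F 0.
  move=> p v.
  have H : is_derive p v F ('D_v f p - a *: v).
    apply: is_deriveB; first exact/derivableP/diff_derivable.
  by rewrite (@dir_der R N f a df hJ) subrr in H.
pose d := x - x'.
pose gl := fun s : R => F (s *: d + x').
have dgl : forall t, derivable gl t 1 /\ 'D_1 gl t = 0.
  move=> t; rewrite /derivable /derive line_der.
  have [H1 H2] := dF (t *: d + x') d.
  by split; [exact: H1 | exact: H2].
suff : F (1 *: d + x') = F (0 *: d + x').
  rewrite scale1r scale0r add0r /d subrK /F => H.
  by rewrite -(subrK (a *: x) (f x)) H scalerBr addrC addrA addKr addrC.
apply/matrixP => i j.
apply: (@is_derive_0_is_cst _ (fun s => gl s i j)) => t.
have [D1 D2] := dgl t.
apply: DeriveDef; first by move: D1 => /derivable_mxP; apply.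
by move: (derive_mx D1) => /(congr1 (fun A : 'M[R]_(N,1) => A i j)); rewrite D2 !mxE => <-.
Qed.
Lemma s_tail (R : realType) (N n : nat) (hnN : (n < N)%N)
  (W U V : 'M[R]_N) (s : 'rV[R]_N)
  (hsvd : is_SVD W U V s) (hrank : \rank W = n) (i : 'I_N) :
  (n <= i)%N -> s 0 i = 0.
Proof.
case: hsvd => hU hV hs0 hsort hW.
pose n0 : 'I_N := Ordinal hnN.
suff sn0 : s 0 n0 = 0.
  move=> ni; apply/eqP; rewrite eq_le hs0 andbT -sn0; exact: hsort.
apply/eqP; rewrite eq_le hs0 andbT; apply/negP => /negP; rewrite -ltNge => spos.
have hD : diag_mx s = U^T *m W *m V.
  by rewrite hW !mulmxA hU mul1mx -!mulmxA hV mulmx1.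
pose t : 'rV[R]_N := \row_k (if (k <= n)%N then (s 0 k)^-1 else 0).
have hP : diag_mx t *m diag_mx s = pid_mx n.+1.
  rewrite mul_diag_mx; apply/matrixP => k j; rewrite !mxE.
  case: (eqVneq k j) => [<-|ij]; last first.
    by rewrite mulr0n mulr0 /= (_ : (k == j :> nat) = false) //; apply/negbTE; rewrite -(inj_eq val_inj) in ij.
  rewrite eqxx /= mulr1n ltnS; case: ifP => hin; last by rewrite mul0r.
  rewrite mulVf //; apply: lt0r_neq0; apply: lt_le_trans spos _; exact: hsort.
have : (\rank (pid_mx n.+1 : 'M[R]_N) <= n)%N.
  rewrite -hP -hrank; apply: leq_trans (mxrankM_maxr _ _) _.
  rewrite hD; apply: leq_trans (mxrankM_maxl _ _) _; exact: mxrankM_maxr.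
by rewrite rank_pid_mx // ltnn.
Qed.
Lemma WPM (R : realType) (N n : nat) (hnN : (n < N)%N)
  (W U V : 'M[R]_N) (s : 'rV[R]_N)
  (hsvd : is_SVD W U V s) (stail : forall i : 'I_N, (n <= i)%N -> s 0 i = 0)
  (Mp : 'M[R]_(N, n)) :
  let Vn : 'M[R]_(N, n) := colsub (fun j : 'I_n => widen_ord (ltnW hnN) j) V in
  let M : 'M[R]_(n, N) := Vn^T in
  is_MP_pinv M Mp -> W *m Mp *m M = W.
Proof.
move=> Vn M [h1 _ _ _].
case: hsvd => _ _ _ _ hW.
pose X : 'M[R]_(N, n) := \matrix_(k, j) (s 0 k * ((k : nat) == j)%:R).
have hX : diag_mx s *m V^T = X *m M.
  rewrite mul_diag_mx; apply/matrixP => k l; rewrite !mxE.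
  case: (ltnP k n) => kn.
    rewrite (bigD1 (Ordinal kn)) //= big1 ?addr0.
      by rewrite !mxE eqxx mulr1 /=; congr (_ * V _ _); apply: val_inj.
    move=> j hj; rewrite !mxE (_ : (k == j :> nat) = false) ?mulr0 ?mul0r //.
    by apply/negbTE; apply: contra hj => /eqP e; apply/eqP; apply: val_inj.
  rewrite stail // mul0r big1 // => j _; rewrite !mxE stail // !mul0r //.
by rewrite hW -[U *m _ *m V^T]mulmxA hX -!mulmxA (mulmxA M Mp M) h1.
Qed.

Theorem corollaryS61 (R : realType) (N n : nat) (hn1 : (1 <= n)%N) (hnN : (n < N)%N)
  (W U V : 'M[R]_N) (s : 'rV[R]_N)
  (hsvd : is_SVD W U V s) (hrank : \rank W = n)
  (g : 'cV[R]_N -> 'cV[R]_N -> 'cV[R]_N) (a : R)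
  (hC1 : C1 (fun p : 'cV[R]_N * 'cV[R]_N => g p.1 p.2))
  (hJ : forall x y : 'cV[R]_N, jacobian_col (fun z : 'cV[R]_N => g z y) x = a%:M)
  (Mp : 'M[R]_(N, n)) :
  let Vn : 'M[R]_(N, n) := colsub (fun j : 'I_n => widen_ord (ltnW hnN) j) V in
  let M : 'M[R]_(n, N) := Vn^T in
  is_MP_pinv M Mp ->
  forall x : 'cV[R]_N,
    (Num.sqrt (n%:R))^-1 *
      enorm (M *m g x (W *m x) - M *m g (Mp *m M *m x) (W *m Mp *m M *m x)) = 0.
Proof.
move=> Vn M hMP x.
have hWP := @WPM R N n hnN W U V s hsvd (@s_tail R N n hnN W U V s hsvd hrank) Mp hMP.
rewrite -/Vn -/M in hWP.
rewrite hWP.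
have df : forall p, differentiable (fun z : 'cV[R]_N => g z (W *m x)) p.
  move=> p.
  have -> : (fun z : 'cV[R]_N => g z (W *m x)) =
    (fun q : 'cV[R]_N * 'cV[R]_N => g q.1 q.2) \o (fun z => (z, W *m x)) by [].
  apply: differentiable_comp; last exact: hC1.1.
  by apply: differentiable_pair.
have := @affine_of_jac R N _ a df (fun p => hJ p (W *m x)) x (Mp *m M *m x).
move=> H.
have -> : M *m g x (W *m x) - M *m g (Mp *m M *m x) (W *m x) = 0.
  rewrite -mulmxBr H -scalemxAr mulmxBr !mulmxA.
  by case: hMP => -> _ _ _; rewrite subrr scaler0.
rewrite /enorm big1 ?sqrtr0 ?mulr0 // => i _.
by rewrite mxE expr0n.
Qed.
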